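(* For $U\in\mathcal{U}_N$ and $j\in[n]$, $\mathrm{Inf}_j[U]=1-\frac{1}{2^{n+1}}\mathrm{Tr}\big((\mathrm{Tr}_jU^\dagger)(\mathrm{Tr}_jU)\big)$. More generally, for $S\subseteq[n]$, $\mathrm{Inf}_S[U]=1-\frac{1}{2^{n+|S|}}\mathrm{Tr}\big((\mathrm{Tr}_SU^\dagger)(\mathrm{Tr}_SU)\big)$.
   Context: $N=2^n$, $\mathcal{U}_N$ is the set of $N\times N$ unitaries. For $x\in\mathbb{Z}_4^n$, $\sigma_x=\sigma_{x_1}\otimes\cdots\otimes\sigma_{x_n}$ with $\sigma_0=I,\sigma_1=X,\sigma_2=Y,\sigma_3=Z$, and $\mathrm{supp}(x)=\{i:x_i\ne0\}$. Writing $U=\sum_x\widehat{U}(x)\sigma_x$, $\mathrm{Inf}_S[U]=\sum_{x:\,\mathrm{supp}(x)\cap S\ne\emptyset}|\widehat{U}(x)|^2$ and $\mathrm{Inf}_j[U]=\mathrm{Inf}_{\{j\}}[U]$. The partial trace over $S$ is $\mathrm{Tr}_S(U)=\sum_{k\in\{0,1\}^S}(I_{\overline S}\otimes\langle k|)\,U\,(I_{\overline S}\otimes|k\rangle)$, an operator on the qubits in $\overline{S}=[n]\setminus S$; $\mathrm{Tr}_j=\mathrm{Tr}_{\{j\}}$. *)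

(* Defs.v *)
From HB Require Import structures.
From mathcomp Require Import all_boot all_order all_algebra.
From mathcomp Require Import algC.
Set Implicit Arguments. Unset Strict Implicit. Unset Printing Implicit Defensive.
Import Order.TTheory GRing.Theory Num.Theory.
Local Open Scope ring_scope.

(* Computational basis states of a register of qubits labelled by a finite type A *)
Definition bits (A : finType) := {ffun A -> bool}.

(* Linear operators on the register A, as matrices indexed by basis states:
   U a b = <a| U |b>. *)
Definition qop (A : finType) := bits A -> bits A -> algC.

Definition qadj (A : finType) (U : qop A) : qop A := fun a b => (U b a)^*.
Definition qmul (A : finType) (U V : qop A) : qop A :=
  fun a b => \sum_(c : bits A) U a c * V c b.
Definition qid (A : finType) : qop A := fun a b => (a == b)%:R.
Definition qtr (A : finType) (U : qop A) : algC := \sum_(a : bits A) U a a.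

Definition unitary (A : finType) (U : qop A) : Prop :=
  qmul (qadj U) U = @qid A /\ qmul U (qadj U) = @qid A.

(* single-qubit Paulis: sigma_0 = I, sigma_1 = X, sigma_2 = Y, sigma_3 = Z;
   entry (r, s) = <r| sigma |s>, with false = |0>, true = |1>. *)
Definition pauli1 (k : 'I_4) (r s : bool) : algC :=
  match nat_of_ord k with
  | 0%N => (r == s)%:R
  | 1%N => (r != s)%:R
  | 2%N => if r == s then 0 else if s then - 'i else 'i
  | _ => if r == s then (if r then -1 else 1) else 0
  end.

Definition sigma (n : nat) (x : {ffun 'I_n -> 'I_4}) : qop 'I_n :=
  fun a b => \prod_(i < n) pauli1 (x i) (a i) (b i).

Definition supp (n : nat) (x : {ffun 'I_n -> 'I_4}) : {set 'I_n} :=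
  [set i | nat_of_ord (x i) != 0%N].

(* Inf_S[U] = sum over x with supp(x) meeting S of |U^(x)|^2,
   where Uhat is the Pauli coefficient function of U. *)
Definition Inf (n : nat) (Uhat : {ffun 'I_n -> 'I_4} -> algC) (S : {set 'I_n}) : algC :=
  \sum_(x : {ffun 'I_n -> 'I_4} | supp x :&: S != set0) `|Uhat x| ^+ 2.

Definition inS (n : nat) (S : {set 'I_n}) := {i : 'I_n | i \in S}.
Definition outS (n : nat) (S : {set 'I_n}) := {i : 'I_n | i \notin S}.

Definition merge (n : nat) (S : {set 'I_n}) (a : bits (outS S)) (k : bits (inS S))
  : bits 'I_n :=
  [ffun i => match boolP (i \in S) with
             | AltTrue h => k (exist _ i h)
             | AltFalse h => a (exist _ i h)
             end].

(* Partial trace over S: Tr_S(U) = sum_k (I ⊗ <k|) U (I ⊗ |k>),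
   an operator on the qubits outside S. *)
Definition ptrace (n : nat) (S : {set 'I_n}) (U : qop 'I_n) : qop (outS S) :=
  fun a b => \sum_(k : bits (inS S)) U (merge a k) (merge b k).
Arguments ptrace {n} S U _ _.

(* Main.v *)
Require Import Defs.
From mathcomp Require Import all_boot all_order all_algebra.
From mathcomp Require Import algC.
From mathcomp Require Import ring.
Import Order.TTheory GRing.Theory Num.Theory.
Local Open Scope ring_scope.

Lemma merge_in n (S : {set 'I_n}) (a : bits (outS S)) (k : bits (inS S)) i (Hi : i \in S) : Defs.merge a k i = k (exist _ i Hi).
Proof.
rewrite /Defs.merge ffunE; destruct (boolP (i \in S)) as [h|h]; last by exfalso; exact: (negP h Hi).
by rewrite (bool_irrelevance h Hi).
Qed.
Lemma merge_out n (S : {set 'I_n}) (a : bits (outS S)) (k : bits (inS S)) i (Hi : i \notin S) : Defs.merge a k i = a (exist _ i Hi).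
Proof.
rewrite /Defs.merge ffunE; destruct (boolP (i \in S)) as [h|h]; first by exfalso; exact: (negP Hi h).
by rewrite (bool_irrelevance h Hi).
Qed.

Arguments merge_in {n S a k i}.
Arguments merge_out {n S a k i}.

Lemma pauliA (k l : 'I_4) : \sum_(r : bool) \sum_(s : bool) pauli1 k r r * pauli1 l s s
  = if (nat_of_ord k == 0%N) && (nat_of_ord l == 0%N) then 4 else 0.
Proof.
case: k => [[|[|[|[|m]]]] Hk] //; case: l => [[|[|[|[|m']]]] Hl] //;
rewrite !big_bool /pauli1 /= ; ring.
Qed.
Lemma pauliB (k l : 'I_4) : \sum_(r : bool) \sum_(s : bool) pauli1 k r s * pauli1 l s r
  = if k == l then 2 else 0.
Proof.
case: k => [[|[|[|[|m]]]] Hk] //; case: l => [[|[|[|[|m']]]] Hl] //;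
rewrite !big_bool /pauli1 /= ?mulrN ?mulNr ?opprK -?expr2 ?sqrCi; ring.
Qed.

Section M.
Variables (n : nat) (S : {set 'I_n}).
Definition pout (z : bits 'I_n) : bits (outS S) := [ffun i : outS S => z (val i)].
Definition pin (z : bits 'I_n) : bits (inS S) := [ffun i : inS S => z (val i)].
Definition hmix (z w : bits 'I_n) : bits 'I_n := [ffun i => if i \in S then z i else w i].

Lemma pout_merge a k : pout (Defs.merge a k) = a.
Proof. by apply/ffunP => -[i Hi]; rewrite ffunE /= (merge_out Hi). Qed.
Lemma pin_merge a k : pin (Defs.merge a k) = k.
Proof. by apply/ffunP => -[i Hi]; rewrite ffunE /= (merge_in Hi). Qed.
Lemma merge_p z : Defs.merge (pout z) (pin z) = z.
Proof.
apply/ffunP => i; case Hi: (i \in S).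
  by rewrite (merge_in Hi) ffunE.
by rewrite (merge_out (negbT Hi)) ffunE.
Qed.

Lemma sum_merge (F : bits 'I_n -> algC) :
  \sum_(z : bits 'I_n) F z = \sum_(a : bits (outS S)) \sum_(k : bits (inS S)) F (Defs.merge a k).
Proof.
rewrite pair_bigA /=.
rewrite (reindex (fun p : bits (outS S) * bits (inS S) => @Defs.merge n S p.1 p.2)) //=.
exists (fun z => (pout z, pin z)) => [[a k] _|z _] /=.
  by rewrite pout_merge pin_merge.
by rewrite merge_p.
Qed.

Lemma hmix_merge (a b : bits (outS S)) (k l : bits (inS S)) : hmix (Defs.merge a k) (Defs.merge b l) = Defs.merge b k.
Proof.
apply/ffunP => i; rewrite ffunE; case Hi: (i \in S).
  by rewrite !(merge_in Hi).
by rewrite !(merge_out (negbT Hi)).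
Qed.

Definition B (V W : qop 'I_n) : algC :=
  \sum_(z : bits 'I_n) \sum_(w : bits 'I_n) V z (hmix z w) * W w (hmix w z).

Lemma trace_B V W : qtr (qmul (ptrace S V) (ptrace S W)) = B V W.
Proof.
rewrite /B /qtr /qmul /ptrace sum_merge.
apply: eq_bigr => a _.
under eq_bigr => c _ do rewrite big_distrl /=.
rewrite exchange_big /=; apply: eq_bigr => k _; rewrite sum_merge.
apply: eq_bigr => b _; rewrite big_distrr /=.
by apply: eq_bigr => l _; rewrite !hmix_merge.
Qed.


Definition g (x y : {ffun 'I_n -> 'I_4}) (i : 'I_n) : algC :=
  if i \in S then (if (nat_of_ord (x i) == 0%N) && (nat_of_ord (y i) == 0%N) then 4 else 0)
  else (if x i == y i then 2 else 0).

Lemma prod_g x y : \prod_i g x y i = ((x == y) && (supp x :&: S == set0))%:R * 2 ^+ (n + #|S|).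
Proof.
have [/andP [/eqP <- /eqP Hs]|Hc] := boolP ((x == y) && (supp x :&: S == set0)).
  rewrite mul1r.
  rewrite (eq_bigr (fun i => 2 * (if i \in S then 2 else 1))); last first.
    move=> i _; rewrite /g; case Hi: (i \in S); last by rewrite eqxx mulr1.
    have : i \notin supp x :&: S by rewrite Hs inE.
    rewrite !inE Hi andbT negbK => ->; by rewrite /= -natrM.
  rewrite big_split /= prodr_const card_ord -big_mkcond /= prodr_const exprD.
  done.
rewrite mul0r.
case/nandP: Hc => [Hxy|Hs].
  have [i Hi] : exists i, x i != y i.
    apply/existsP; apply: contraR Hxy; rewrite negb_exists => /forallP H.
    by apply/eqP/ffunP => i; apply/eqP; move: (H i); rewrite negbK.
  rewrite (bigD1 i) //=; suff -> : g x y i = 0 by rewrite mul0r.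
  rewrite /g (negbTE Hi); case: (i \in S) => //.
  case: ifP => // /andP [H1 H2]; case/eqP: Hi; apply: val_inj.
  by rewrite /= (eqP H1) (eqP H2).
case/set0Pn: Hs => i; rewrite !inE => /andP [Hx Hi].
rewrite (bigD1 i) //=; suff -> : g x y i = 0 by rewrite mul0r.
by rewrite /g Hi (negbTE Hx).
Qed.

Definition f (x y : {ffun 'I_n -> 'I_4}) (i : 'I_n) (r s : bool) : algC :=
  if i \in S then pauli1 (x i) r r * pauli1 (y i) s s
  else pauli1 (x i) r s * pauli1 (y i) s r.

Lemma B_sigma x y : B (sigma x) (sigma y) = ((x == y) && (supp x :&: S == set0))%:R * 2 ^+ (n + #|S|).
Proof.
rewrite -prod_g /B /sigma.
transitivity (\sum_(z : {ffun 'I_n -> bool}) \sum_(w : {ffun 'I_n -> bool}) \prod_i f x y i (z i) (w i)).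
  apply: eq_bigr => z _; apply: eq_bigr => w _; rewrite -big_split /=.
  by apply: eq_bigr => i _; rewrite /f !ffunE; case: (i \in S).
rewrite (eq_bigr (fun z : {ffun 'I_n -> bool} => \prod_i \sum_s f x y i (z i) s)); last first.
  by move=> z _; rewrite (bigA_distr_bigA (fun i s => f x y i (z i) s)).
rewrite -(bigA_distr_bigA (fun i r => \sum_s f x y i r s)).
apply: eq_bigr => i _; rewrite /f /g; case: (i \in S).
  exact: pauliA.
exact: pauliB.
Qed.
End M.

Arguments B {n} S V W.
Arguments hmix {n} S z w.

Lemma pauli_conj (k : 'I_4) r s : (pauli1 k s r)^* = pauli1 k r s.
Proof.
case: k => [[|[|[|[|m]]]] Hk] //; case: r; case: s;
  rewrite /pauli1 /= ?conjC0 ?conjC1 ?conjCi ?raddfN /= ?conjC1 ?conjCi ?opprK //.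
Qed.

Lemma sigma_adj n x (a b : bits 'I_n) : (sigma x b a)^* = sigma x a b.
Proof. rewrite /sigma rmorph_prod; apply: eq_bigr => i _; exact: pauli_conj. Qed.

Lemma B_bilin n (S : {set 'I_n}) (V W : qop 'I_n) (c d : {ffun 'I_n -> 'I_4} -> algC) :
  (forall a b, V a b = \sum_x c x * sigma x a b) ->
  (forall a b, W a b = \sum_x d x * sigma x a b) ->
  B S V W = \sum_x \sum_y c x * d y * B S (sigma x) (sigma y).
Proof.
move=> HV HW.
transitivity (\sum_(z : bits 'I_n) \sum_(w : bits 'I_n) \sum_x \sum_y
   (c x * d y * (sigma x z (hmix S z w) * sigma y w (hmix S w z)))).
  apply: eq_bigr => z _; apply: eq_bigr => w _; rewrite HV HW big_distrl /=.
  apply: eq_bigr => x _; rewrite big_distrr /=; apply: eq_bigr => y _.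
  by rewrite mulrACA.
under eq_bigr => z _ do rewrite exchange_big /=.
rewrite exchange_big /=; apply: eq_bigr => x _.
under eq_bigr => z _ do rewrite exchange_big /=.
rewrite exchange_big /=; apply: eq_bigr => y _.
rewrite /B big_distrr /=; apply: eq_bigr => z _.
by rewrite big_distrr.
Qed.

Lemma hmix0 n (z w : bits 'I_n) : hmix set0 z w = w.
Proof. by apply/ffunP => i; rewrite ffunE in_set0. Qed.

Lemma trace_B0 n (V W : qop 'I_n) : qtr (qmul V W) = B set0 V W.
Proof.
rewrite /qtr /qmul /B; apply: eq_bigr => z _; apply: eq_bigr => w _.
by rewrite !hmix0.
Qed.

Lemma qtr_qid n : qtr (@qid 'I_n) = 2 ^+ n.
Proof.
rewrite /qtr /qid (eq_bigr (fun _ => 1)); last by move=> a _; rewrite eqxx.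
by rewrite sumr_const card_ffun card_bool card_ord natrX.
Qed.

Lemma key n (S : {set 'I_n}) (U : qop 'I_n) (Uhat : {ffun 'I_n -> 'I_4} -> algC) :
  (forall a b, U a b = \sum_(x : {ffun 'I_n -> 'I_4}) Uhat x * sigma x a b) ->
  B S (qadj U) U = (\sum_(x | supp x :&: S == set0) `|Uhat x| ^+ 2) * 2 ^+ (n + #|S|).
Proof.
move=> HU.
have HA : forall a b, qadj U a b = \sum_x (Uhat x)^* * sigma x a b.
  move=> a b; rewrite /qadj HU rmorph_sum; apply: eq_bigr => x _.
  by rewrite rmorphM /= sigma_adj.
rewrite (@B_bilin n S _ _ _ _ HA HU) big_distrl /= [RHS]big_mkcond /=.
apply: eq_bigr => x _.
rewrite (bigD1 x) //= big1 ?addr0; last first.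
  by move=> y /negbTE Hy; rewrite B_sigma eq_sym Hy /= mulr0n mul0r mulr0.
rewrite B_sigma eqxx /= normCK mulrC.
by case: (supp x :&: S == set0); rewrite /= ?mulr1n ?mul1r ?mulr0n ?mul0r ?mulr0 // mulrC [Uhat x * _]mulrC.
Qed.

Lemma K_neq0 m : (2 : algC) ^+ m != 0.
Proof. by rewrite expf_neq0 // pnatr_eq0. Qed.

Theorem mainTheorem12 (n : nat) (U : qop 'I_n)
    (Uhat : {ffun 'I_n -> 'I_4} -> algC) :
  unitary U ->
  (forall a b, U a b = \sum_(x : {ffun 'I_n -> 'I_4}) Uhat x * sigma x a b) ->
  (forall j : 'I_n,
     Inf Uhat [set j] =
     1 - (2 ^+ (n + 1))^-1 * qtr (qmul (ptrace [set j] (qadj U)) (ptrace [set j] U)))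
  /\
  (forall S : {set 'I_n},
     Inf Uhat S =
     1 - (2 ^+ (n + #|S|))^-1 * qtr (qmul (ptrace S (qadj U)) (ptrace S U))).
Proof.
move=> [HU _] Hexp.
have Htot : \sum_x `|Uhat x| ^+ 2 = 1.
  have := qtr_qid n; rewrite -HU trace_B0 (@key n set0 _ _ Hexp) cards0 addn0.
  have -> : \sum_(x | supp x :&: set0 == set0) `|Uhat x| ^+ 2 = \sum_x `|Uhat x| ^+ 2.
    by apply: eq_bigl => x; rewrite setI0 eqxx.
  by move=> H; apply: (mulIf (K_neq0 n)); rewrite mul1r.
have HS : forall S : {set 'I_n}, Inf Uhat S =
     1 - (2 ^+ (n + #|S|))^-1 * qtr (qmul (ptrace S (qadj U)) (ptrace S U)).
  move=> S; rewrite trace_B (@key n S _ _ Hexp) mulrC mulfK ?K_neq0 //.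
  rewrite -Htot (bigID (fun x => supp x :&: S == set0)) /= addrC addrK /Inf.
  done.
split => // j; by rewrite HS cards1.
Qed.
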